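(* Let $Q$ be a QNP and let $P'=T_D(Q)$ be its direct translation. If $\pi$ solves $Q$ and $\bar\tau=\bar s_0,\bar s_1,\dots$ is an infinite $\pi$-trajectory of $P'$, then there is a variable $X$ and a recurrent state $\bar s$ of $\bar\tau$ such that $\pi(\bar s)$ is a $Dec(X)$ action and $X$ is in $stack(\bar s')$ for every recurrent state $\bar s'$ of $\bar\tau$.
   Context: QNPs: $Q=\langle F,V,I,O,G\rangle$ with propositional variables $F$, numerical variables $V$ (non-negative reals), literals $p,\neg p$, $X=0$, $X>0$; actions with precondition $Pre(a)$, propositional effects, numerical effects $N(a)\subseteq\{Inc(X),Dec(X)\}$ (at most one per variable; $Dec(X)\in N(a)$ implies $X>0\in Pre(a)$). A state assigns truth values to $F$ and reals $\ge0$ to $V$; initial states satisfy $I$ (closed world); goal states satisfy $G$; for applicable $a$, successors apply propositional effects, strictly increase $X$ for $Inc(X)$, strictly decrease $X$ for $Dec(X)$, rest unchanged. For $\epsilon>0$ an $\epsilon$-trajectory is such a sequence from an initial state where each change of a variable has magnitude $\ge\epsilon$ unless it goes from a value $<\epsilon$ to $0$. The boolean state $\bar s$ is the truth valuation on atoms $p$ and $X=0$; a policy maps states to actions depending only on the boolean state; a maximal $\pi$-trajectory is infinite without goal, ends at its first goal state, or ends where $\pi$ is undefined/inapplicable; $\pi$ solves $Q$ iff for all $\epsilon>0$ all maximal $\epsilon$-$\pi$-trajectories reach a goal state. $T_D(Q)$ is the FOND problem over $F\cup\{p_{X=0}\}$ reading $X=0$/$X>0$ as $p_{X=0}$/$\neg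 p_{X=0}$, replacing $Inc(X)$ by the deterministic effect $\neg p_{X=0}$ and $Dec(X)$ by the nondeterministic effect $\neg p_{X=0}\mid p_{X=0}$; its states are boolean states and $\pi$ acts via $\bar s\mapsto\pi(s)$. A $\pi$-trajectory of it starts at its initial state, applies $\pi$ and follows possible successors; recurrent states are those occurring infinitely often. $Dec(X)$/$Inc(X)$ actions are those coming from actions with $Dec(X)$/$Inc(X)$ in $N(a)$. The policy graph $\mathcal G$ has as nodes the states of $T_D(Q)$ reachable under $\pi$ and edges $(\bar s,\bar s')$ for $\bar s'$ a possible successor of $\bar s$ under $\pi(\bar s)$. Fix a run of the following (modified) Sieve procedure on $\mathcal G$: repeatedly compute the strongly connected components (SCCs) of the current graph, choose an SCC $C$ and a variable $X$ such that $\pi(\bar s)$ is a $Dec(X)$ action for some $\bar s\in C$, $\pi(\bar s)$ is an $Inc(X)$ action for no $\bar s\in C$, and $X$ was not chosen in an earlier iteration for a component containing the states of $C$; remove all edges $(\bar s,\bar s')$ with $\bar s,\bar s'\in C$ and $\pi(\bar s)$ a $Dec(X)$ action; stop when no such choice exists (the run is not stopped merely because the graph became acyclic). For a state $\bar s$, $stack(\bar s)$ is the sequence, in order of iterations, of the variables $X$ chosen in those iterations whose chosen component $C$ contains $\bar s$. *)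

(* Defs.v *)
From mathcomp Require Import all_boot.
From Stdlib Require Import Reals.
Set Implicit Arguments. Unset Strict Implicit. Unset Printing Implicit Defensive.

Inductive neff := Inc | Dec.

(** Literals on a numerical variable X are encoded by a boolean:
    [true] stands for "X = 0", [false] for "X > 0".
    Partial literal sets (preconditions, goal, propositional effects) are
    encoded as [option bool]-valued functions ([None] = not mentioned).
    The initial situation I is complete (closed world). *)
Record QNP (F V A : finType) := {
  preF : A -> F -> option bool;
  preV : A -> V -> option bool;
  effF : A -> F -> option bool;
  effV : A -> V -> option neff;          (* at most one of Inc/Dec per var *)
  initF : {ffun F -> bool};
  initV : {ffun V -> bool};
  goalF : F -> option bool;
  goalV : V -> option bool;
  dec_pre : forall a X, effV a X = Some Dec -> preV a X = Some false
}.

(** Boolean states: truth values of the atoms p and of the atoms X=0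
    (these are also the states of T_D(Q), with p_{X=0} = second component). *)
Notation BS F V := ({ffun F -> bool} * {ffun V -> bool})%type.

Section Defs.
Variables (F V A : finType) (Q : QNP F V A).

Definition lits_hold (T : finType) (l : T -> option bool) (b : {ffun T -> bool}) :=
  [forall x, if l x is Some v then b x == v else true].

Definition applicableb (a : A) (b : BS F V) : bool :=
  lits_hold (preF Q a) b.1 && lits_hold (preV Q a) b.2.

Definition goalb (b : BS F V) : bool :=
  lits_hold (goalF Q) b.1 && lits_hold (goalV Q) b.2.

Definition init_bs : BS F V := (initF Q, initV Q).

Record qstate := QState { qF : {ffun F -> bool}; qV : V -> R }.

Definition bool_of_state (s : qstate) : BS F V :=
  (qF s, [ffun X => if Req_EM_T (qV s X) 0%R then true else false]).

Definition valid_state (s : qstate) := forall X, (0 <= qV s X)%R.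

Definition qinit (s : qstate) := valid_state s /\ bool_of_state s = init_bs.

Definition qgoal (s : qstate) := goalb (bool_of_state s).

Definition qapplicable (a : A) (s : qstate) := applicableb a (bool_of_state s).

Definition qstep_eps (eps : R) (a : A) (s s' : qstate) : Prop :=
  qapplicable a s /\ valid_state s' /\
  qF s' = [ffun p => if effF Q a p is Some b then b else qF s p] /\
  (forall X,
     match effV Q a X with
     | Some Inc => (qV s X < qV s' X)%R
     | Some Dec => (qV s' X < qV s X)%R
     | None => qV s' X = qV s X
     end) /\
  (forall X, qV s' X <> qV s X ->
     (eps <= Rabs (qV s' X - qV s X))%R \/ ((qV s X < eps)%R /\ qV s' X = 0%R)).

(** A policy maps states to actions depending only on the boolean state;
    it is given by [pi : BS F V -> option A] ([None] = undefined). *)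
Variable pi : BS F V -> option A.

Definition inf_eps_traj (eps : R) (s : nat -> qstate) : Prop :=
  qinit (s 0) /\
  forall i, ~~ qgoal (s i) /\
    exists a, pi (bool_of_state (s i)) = Some a /\ qstep_eps eps a (s i) (s i.+1).

Definition stuck_eps_traj (eps : R) (n : nat) (s : nat -> qstate) : Prop :=
  qinit (s 0) /\
  (forall i, i < n -> ~~ qgoal (s i) /\
    exists a, pi (bool_of_state (s i)) = Some a /\ qstep_eps eps a (s i) (s i.+1)) /\
  ~~ qgoal (s n) /\
  (pi (bool_of_state (s n)) = None \/
   exists a, pi (bool_of_state (s n)) = Some a /\ ~~ qapplicable a (s n)).

(** pi solves Q: for every eps > 0, every maximal eps-pi-trajectory reaches a
    goal state, i.e. there is no maximal one that does not. *)
Definition solves : Prop :=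
  forall eps : R, (0 < eps)%R ->
    (forall s, ~ inf_eps_traj eps s) /\ (forall n s, ~ stuck_eps_traj eps n s).

Definition succb (a : A) (b b' : BS F V) : bool :=
  [forall p, b'.1 p == (if effF Q a p is Some v then v else b.1 p)] &&
  [forall X, match effV Q a X with
             | Some Inc => ~~ b'.2 X
             | Some Dec => true
             | None => b'.2 X == b.2 X
             end].

(** One pi-step of T_D(Q) (trajectories end at goal states). *)
Definition pistep (b b' : BS F V) : bool :=
  ~~ goalb b &&
  (if pi b is Some a then applicableb a b && succb a b b' else false).

Definition inf_traj_D (tau : nat -> BS F V) : Prop :=
  tau 0 = init_bs /\ forall i, pistep (tau i) (tau i.+1).

Definition recurrent (tau : nat -> BS F V) (b : BS F V) : Prop :=
  forall n, exists m, n <= m /\ tau m = b.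

Definition isDec (b : BS F V) (X : V) : bool :=
  if pi b is Some a then (if effV Q a X is Some Dec then true else false) else false.
Definition isInc (b : BS F V) (X : V) : bool :=
  if pi b is Some a then (if effV Q a X is Some Inc then true else false) else false.

Definition reachable (b : BS F V) : bool := connect pistep init_bs b.

Definition pgraph : rel (BS F V) := fun b b' => reachable b && pistep b b'.

Definition isSCC (E : rel (BS F V)) (C : {set BS F V}) : Prop :=
  exists u, reachable u /\ C = [set v | connect E u v && connect E v u].

Fixpoint edges_after (E : rel (BS F V)) (r : seq ({set BS F V} * V)) : rel (BS F V) :=
  match r with
  | [::] => E
  | (C, X) :: r' =>
      edges_after (fun u v => E u v && ~~ [&& u \in C, v \in C & isDec u X]) r'
  end.

Definition valid_choice (E : rel (BS F V)) (prev : seq ({set BS F V} * V))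
    (C : {set BS F V}) (X : V) : Prop :=
  isSCC E C /\
  (exists s, s \in C /\ isDec s X) /\
  (forall s, s \in C -> ~~ isInc s X) /\
  ~ (exists C', (C', X) \in prev /\ C \subset C').

(** A complete run of the modified Sieve procedure on G: the list of
    choices (C_i, X_i), each admissible at its iteration, and no admissible
    choice remains at the end. *)
Definition sieve_run (run : seq ({set BS F V} * V)) : Prop :=
  (forall pre C X post, run = pre ++ (C, X) :: post ->
     valid_choice (edges_after pgraph pre) pre C X)
  /\ (forall C X, ~ valid_choice (edges_after pgraph run) run C X).

(** X belongs to stack(b) for the run [run]: X was chosen in some iteration
    whose component contains b. *)
Definition in_stack (run : seq ({set BS F V} * V)) (b : BS F V) (X : V) : Prop :=
  exists C, (C, X) \in run /\ b \in C.

End Defs.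

(* Main.v *)
Require Import Defs.
From mathcomp Require Import all_boot.
From Stdlib Require Import Reals Lra Lia Classical ClassicalEpsilon.
From mathcomp Require Import zify.
Set Implicit Arguments. Unset Strict Implicit. Unset Printing Implicit Defensive.

Section Gen.
Variable T : finType.

Lemma walk_connect (E : rel T) (f : nat -> T) N :
  (forall i, N <= i -> E (f i) (f i.+1)) ->
  forall a b, N <= a -> a <= b -> connect E (f a) (f b).
Proof.
move=> HE a b Na; elim: b => [|b IH].
  by rewrite leqn0 => /eqP ->.
rewrite leq_eqVlt => /orP [/eqP -> //|].
rewrite ltnS => ab; apply: connect_trans (IH ab) _.
apply: connect1; apply: HE; exact: leq_trans ab.
Qed.

Lemma fin_bound (U : eqType) (P : U -> nat -> Prop) (s : seq U) :
  (forall p, exists n, forall m, n <= m -> P p m) ->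
  exists N, forall p, p \in s -> forall m, N <= m -> P p m.
Proof.
move=> H; elim: s => [|x s [N HN]]; first by exists 0.
have [n Hn] := H x.
exists (maxn n N) => p; rewrite inE => /orP [/eqP ->|ps] m Hm.
  by apply: Hn; apply: leq_trans Hm; apply: leq_maxl.
by apply: HN => //; apply: leq_trans Hm; apply: leq_maxr.
Qed.

Lemma split_first (U : Type) (P : seq U -> Prop) (s : seq U) :
  P [::] -> ~ P s -> exists pre x post, s = pre ++ x :: post /\ P pre /\ ~ P (rcons pre x).
Proof.
move=> P0; elim/last_ind: s => [//|s x IH] Hn.
case: (classic (P s)) => Ps.
  by exists s, x, [::]; rewrite cats1.
have [pre [y [post [-> [H1 H2]]]]] := IH Ps.
exists pre, y, (rcons post x); split => //.
by rewrite rcons_cat.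
Qed.

Lemma targets (E : rel T) (u : T) (C : {set T}) :
  C = [set w | connect E u w && connect E w u] ->
  forall ts x, x \in C -> all (mem C) ts ->
  exists p, [/\ path E x p, last x p = u & {subset ts <= x :: p}].
Proof.
move=> HC; elim => [|t ts IH] x xC /=.
  move: xC; rewrite HC inE => /andP [_ /connectP [p Hp ->]] _.
  by exists p; split.
move=> /andP [tC tsC].
have [p2 [P2 L2 S2]] := IH t tC tsC.
have : connect E x t.
  move: xC tC; rewrite HC !inE => /andP [_ H1] /andP [H2 _].
  exact: connect_trans H1 H2.
move=> /connectP [p1 P1 L1].
exists (p1 ++ p2); split.
- by rewrite cat_path P1 -L1 P2.
- by rewrite last_cat -L1.
- move=> y; rewrite inE => /orP [/eqP ->|yts].
    by rewrite L1 -cat_cons mem_cat mem_last.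
  move: (S2 y yts); rewrite inE => /orP [/eqP ->|yp2].
    by rewrite L1 -cat_cons mem_cat mem_last.
  by rewrite inE mem_cat yp2 !orbT.
Qed.

Definition cyc (u : T) (c : seq T) (n : nat) := nth u (u :: c) (n %% size c).

Lemma cyc_step (E : rel T) u c : path E u c -> last u c = u -> 0 < size c ->
  forall n, E (cyc u c n) (cyc u c n.+1).
Proof.
move=> Pc Lc Sc n; rewrite /cyc.
have Hi : n %% size c < size c by rewrite ltn_mod.
have -> : n.+1 %% size c = (n %% size c).+1 %% size c.
  by rewrite -addn1 -modnDml addn1.
move/pathP: Pc => /(_ u _ Hi) Hp.
move: Hi; rewrite leq_eqVlt => /orP [/eqP Heq|Hlt].
  rewrite Heq modnn /=; move: Hp.
  have H1 : nth u c (size c).-1 = u by rewrite nth_last.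
  by rewrite -Heq /= in H1; rewrite H1.
by rewrite (modn_small Hlt).
Qed.

Lemma cyc_visit u c w : last u c = u -> 0 < size c -> w \in u :: c ->
  forall n, exists m, n <= m /\ cyc u c m = w.
Proof.
move=> Lc Sc wc n.
have [i [Hi Hw]] : exists i, i < size c /\ nth u (u :: c) i = w.
  case: (eqVneq w u) => [->|wu]; first by exists 0.
  move: wc; rewrite inE (negbTE wu) /= => wc.
  exists (index w c).+1; split; last by rewrite /= nth_index.
  have : index w c < size c by rewrite index_mem.
  rewrite leq_eqVlt => /orP [/eqP Heq|//].
  have H1 : nth u c (size c).-1 = u by rewrite nth_last.
  by rewrite -Heq /= nth_index // in H1; rewrite H1 eqxx in wu.
exists (n * size c + i); split.
  by apply: leq_trans (leq_addr _ _); rewrite leq_pmulr.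
by rewrite /cyc modnMDl modn_small.
Qed.

Definition pcyc (x0 : T) (q : seq T) (u : T) (c : seq T) (n : nat) :=
  if n < size q then nth x0 (x0 :: q) n else cyc u c (n - size q).

Lemma pcyc_props (E1 E2 : rel T) x0 q u c :
  path E1 x0 q -> last x0 q = u -> path E2 u c -> last u c = u -> 0 < size c ->
  (forall a b, E2 a b -> E1 a b) ->
  [/\ pcyc x0 q u c 0 = x0,
      forall n, E1 (pcyc x0 q u c n) (pcyc x0 q u c n.+1),
      forall n, size q <= n -> E2 (pcyc x0 q u c n) (pcyc x0 q u c n.+1),
      pcyc x0 q u c (size q) = u &
      forall w, w \in u :: c -> forall n, exists m, n <= m /\ pcyc x0 q u c m = w].
Proof.
move=> Pq Lq Pc Lc Sc E21.
have Hlate : forall n, size q <= n -> E2 (pcyc x0 q u c n) (pcyc x0 q u c n.+1).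
  move=> n Hn; rewrite /pcyc ltnNge Hn /= ltnNge (leq_trans Hn (leqnSn _)) /=.
  rewrite subSn //; exact: cyc_step.
split => //.
- rewrite /pcyc; clear Hlate; case: q Pq Lq => [|y q] //= _ <-.
  by rewrite /cyc mod0n.
- move=> n; case: (leqP (size q) n) => Hn; first by apply: E21; apply: Hlate.
  rewrite /pcyc Hn; move/pathP: Pq => /(_ x0 _ Hn) Hp.
  case: (ltnP n.+1 (size q)) => H2; first by [].
  have Hsz : n.+1 = size q by apply/eqP; rewrite eqn_leq Hn H2.
  rewrite Hsz subnn /cyc mod0n /=.
  have H1 : nth x0 q (size q).-1 = u by rewrite nth_last.
  by rewrite -Hsz /= in H1; rewrite -H1.
- by rewrite /pcyc ltnn subnn /cyc mod0n.
- move=> w wc n; have [m [Hm Hw]] := cyc_visit Lc Sc wc n.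
  exists (m + size q); split; first exact: leq_trans Hm (leq_addr _ _).
  by rewrite /pcyc ltnNge leq_addl /= addnK.
Qed.

End Gen.


Lemma INR_diff (a b : nat) : INR a <> INR b -> (1 <= Rabs (INR a - INR b))%R.
Proof.
move=> Hab; case: (ltngtP a b) => H.
- have : (INR a + 1 <= INR b)%R.
    rewrite -S_INR; apply: le_INR; exact/leP.
  move=> H1; unfold Rabs; destruct Rcase_abs; lra.
- have : (INR b + 1 <= INR a)%R.
    rewrite -S_INR; apply: le_INR; exact/leP.
  move=> H1; unfold Rabs; destruct Rcase_abs; lra.
- by rewrite H in Hab.
Qed.

Lemma INR_lt (a b : nat) : a < b -> (INR a < INR b)%R.
Proof. move=> H; apply: lt_INR; exact/ltP. Qed.

Section Main.
Variables (F V A : finType) (Q : QNP F V A) (pi : BS F V -> option A).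

Lemma pistepE b b' : pistep Q pi b b' ->
  exists a, [/\ ~~ goalb Q b, pi b = Some a, applicableb Q a b & succb Q a b b'].
Proof.
rewrite /pistep => /andP [Hg]; case Hp: (pi b) => [a|//] => /andP [H1 H2].
by exists a.
Qed.

Fixpoint vseq (sig : nat -> BS F V) (K : V -> nat -> nat) (n : nat) (X : V) : nat :=
  match n with
  | 0 => if (sig 0).2 X then 0 else (K X 0).+1
  | m.+1 => match pi (sig m) with
     | None => vseq sig K m X
     | Some a => match effV Q a X with
        | None => vseq sig K m X
        | Some Inc => vseq sig K m X + (K X m.+1 - m.+1) + 1
        | Some Dec => if (sig m.+1).2 X then 0 else (vseq sig K m X).-1
        end end
  end.

Lemma num_lemma (sig : nat -> BS F V) : solves Q pi -> inf_traj_D Q pi sig ->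
  exists X i0, (forall k, i0 <= k -> ~~ isInc Q pi (sig k) X) /\
               (forall n, exists j, n <= j /\ isDec Q pi (sig j) X).
Proof.
move=> Hsol [H0 Hstep].
apply: NNPP => Hn.
have HK : forall X i, exists K, forall j, K <= j -> isDec Q pi (sig j) X ->
    exists k, i <= k <= j /\ isInc Q pi (sig k) X.
  move=> X i.
  case: (classic (exists k, i <= k /\ isInc Q pi (sig k) X)) => [[k [ik Hk]]|Hno].
    by exists k => j kj _; exists k; rewrite ik kj.
  case: (classic (exists n, forall j, n <= j -> ~~ isDec Q pi (sig j) X)) => [[n Hnn]|Hinf].
    by exists n => j nj Hd; have := Hnn j nj; rewrite Hd.
  exfalso; apply: Hn; exists X, i; split.
    by move=> k ik; apply/negP => Hk; apply: Hno; exists k.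
  move=> n; apply: NNPP => Hj; apply: Hinf; exists n => j nj; apply/negP => Hd.
  by apply: Hj; exists j.
pose K X i := proj1_sig (constructive_indefinite_description _ (HK X i)).
have HKs : forall X i j, K X i <= j -> isDec Q pi (sig j) X ->
    exists k, i <= k <= j /\ isInc Q pi (sig k) X.
  by move=> X i; exact: (proj2_sig (constructive_indefinite_description _ (HK X i))).
pose v := vseq sig K.
have Inv : forall n X, ((sig n).2 X -> v n X = 0) /\
   (~~ (sig n).2 X -> exists D, (D - n) + 1 <= v n X /\
       forall j, D <= j -> isDec Q pi (sig j) X -> exists k, n <= k <= j /\ isInc Q pi (sig k) X).
  elim => [|n IH] X.
    rewrite /v /=; case: ((sig 0).2 X) => //; split => // _.
    by exists (K X 0); split; [rewrite subn0 addn1|exact: HKs].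
  have [a [_ Hpi Happ Hsucc]] := pistepE (Hstep n).
  have [IH1 IH2] := IH X.
  move: Hsucc => /andP [_ /forallP /(_ X) HX].
  have Hdec : isDec Q pi (sig n) X = (if effV Q a X is Some Dec then true else false).
    by rewrite /isDec Hpi.
  have Hinc : isInc Q pi (sig n) X = (if effV Q a X is Some Inc then true else false).
    by rewrite /isInc Hpi.
  rewrite /v /= Hpi -/v.
  case He: (effV Q a X) HX Hdec Hinc => [[|]|] HX Hdec Hinc.
  -
    rewrite (negbTE HX); split => // _.
    exists (K X n.+1); split; first by rewrite -addnA leq_addl.
    exact: HKs.
  -
    have Hpre := dec_pre He.
    move: Happ => /andP [_ /forallP /(_ X)]; rewrite Hpre => /eqP Hpos.
    case: ((sig n.+1).2 X) => //; split => // _.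
    have [D [HD1 HD2]] := IH2 (negbT Hpos).
    have nD : n < D.
      rewrite ltnNge; apply/negP => Dn.
      have [k [/andP [k1 k2] Hk]] := HD2 n Dn Hdec.
      have kn : k = n by apply/eqP; rewrite eqn_leq k1 k2.
      by rewrite kn Hinc in Hk.
    exists D; split.
      move: HD1 nD; clear; lia.
    move=> j Dj Hj; have [k [/andP [k1 k2] Hk]] := HD2 j Dj Hj.
    exists k; split => //; rewrite k2 andbT ltn_neqAle k1 andbT.
    by apply/eqP => kn; rewrite -kn Hinc in Hk.
  -
    rewrite (eqP HX); split => // Hp.
    have [D [HD1 HD2]] := IH2 Hp.
    exists D; split.
      by apply: leq_trans HD1; rewrite leq_add2r; apply: leq_sub2l.
    move=> j Dj Hj; have [k [/andP [k1 k2] Hk]] := HD2 j Dj Hj.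
    exists k; split => //; rewrite k2 andbT ltn_neqAle k1 andbT.
    by apply/eqP => kn; rewrite -kn Hinc in Hk.
have Vpos : forall n X, ~~ (sig n).2 X -> 0 < v n X.
  move=> n X Hp; have [D [HD _]] := (Inv n X).2 Hp.
  by apply: leq_trans HD; rewrite addn1.
pose s n := QState (sig n).1 (fun X => INR (v n X)).
have Hbs : forall n, bool_of_state (s n) = sig n.
  move=> n; rewrite /bool_of_state /= [RHS]surjective_pairing; congr pair.
  apply/ffunP => X; rewrite ffunE.
  case: Req_EM_T => H.
    case Hx: ((sig n).2 X) => //.
    have := Vpos n X; rewrite Hx => /(_ isT) Hv.
    have : (0 < INR (v n X))%R by exact: (@INR_lt 0 _ Hv).
    lra.
  case Hx: ((sig n).2 X) => //.
  by exfalso; apply: H; rewrite ((Inv n X).1 Hx).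
have Hval : forall n, valid_state (s n) by move=> n X; apply: pos_INR.
apply: ((Hsol 1%R Rlt_0_1).1 s); split.
  by split; [apply: Hval|rewrite Hbs H0].
move=> i; have [a [Hg Hpi Happ Hsucc]] := pistepE (Hstep i).
split; first by rewrite /qgoal Hbs.
exists a; split; first by rewrite Hbs.
split; first by rewrite /qapplicable Hbs.
split; first by apply: Hval.
move: Hsucc => /andP [/forallP HF /forallP HV].
split.
  by apply/ffunP => p; rewrite ffunE /=; apply/eqP; apply: HF.
have Hv : forall X, v i.+1 X = match effV Q a X with
        | None => v i X
        | Some Inc => v i X + (K X i.+1 - i.+1) + 1
        | Some Dec => if (sig i.+1).2 X then 0 else (v i X).-1
        end by move=> X; rewrite /v /= Hpi.
split.
  move=> X; rewrite /= Hv; case He: (effV Q a X) => [[|]|] //.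
  - apply: INR_lt; lia.
  - have Hpre := dec_pre He.
    move: Happ => /andP [_ /forallP /(_ X)]; rewrite Hpre => /eqP Hpos.
    have Hp := Vpos i X (negbT Hpos).
    apply: INR_lt; case: ((sig i.+1).2 X) => //.
    by case: (v i X) Hp => //= m _.
move=> X /= Hne; left; exact: INR_diff.
Qed.



Lemma edges_after_sub r (E : rel (BS F V)) x y :
  edges_after Q pi E r x y -> E x y.
Proof.
elim: r E => [|[C X] r IH] E //= H.
by have /andP [] := IH _ H.
Qed.

Lemma edges_after_cat r1 r2 (E : rel (BS F V)) :
  edges_after Q pi E (r1 ++ r2) = edges_after Q pi (edges_after Q pi E r1) r2.
Proof. by elim: r1 E => [|[C X] r IH] E //=. Qed.

Lemma edges_after_rem (r : seq ({set BS F V} * V)) (E : rel (BS F V)) (C : {set BS F V}) X x y :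
  (C, X) \in r -> x \in C -> y \in C -> isDec Q pi x X -> ~~ edges_after Q pi E r x y.
Proof.
elim: r E => [//|[C' X'] r IH] E; rewrite inE => /orP [/eqP [<- <-]|Hin] xC yC Hd /=.
  by apply/negP => /edges_after_sub /andP [_]; rewrite xC yC Hd.
exact: IH.
Qed.

End Main.

Theorem theorem14 (F V A : finType) (Q : QNP F V A) (pi : BS F V -> option A)
    (run : seq ({set BS F V} * V)) (tau : nat -> BS F V) :
  sieve_run Q pi run ->
  solves Q pi ->
  inf_traj_D Q pi tau ->
  exists (X : V) (b : BS F V),
    recurrent tau b /\ isDec Q pi b X /\
    (forall b', recurrent tau b' -> in_stack run b' X).
Proof.
move=> [Hrun Hfin] Hsol Htau.
have [H0 Hst] := Htau.
pose ER (x y : BS F V) := forall n, exists m, n <= m /\ tau m = x /\ tau m.+1 = y.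
have [N HN] : exists N, forall i, N <= i -> ER (tau i) (tau i.+1).
  have Hb : forall p : (BS F V * BS F V)%type, exists n, forall m, n <= m ->
      (tau m, tau m.+1) = p -> ER p.1 p.2.
    case=> x y /=; case: (classic (ER x y)) => Hxy; first by exists 0.
    have [n Hn] := not_all_ex_not _ _ Hxy.
    exists n => m nm [e1 e2]; exfalso; apply: Hn; exists m; by rewrite e1 e2.
  have [N HN] := @fin_bound _ (fun (p : BS F V * BS F V) m =>
      (tau m, tau m.+1) = p -> ER p.1 p.2) (enum (@predT (BS F V * BS F V)%type)) Hb.
  exists N => i Ni; exact: (HN (tau i, tau i.+1) (mem_enum _ _) i Ni).
have ERrec : forall x y, ER x y -> recurrent tau x /\ recurrent tau y.
  move=> x y H; split => n; have [m [nm [e1 e2]]] := H n.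
    by exists m.
  by exists m.+1; split => //; apply: leq_trans nm _.
have conn : forall E : rel (BS F V), (forall x y, ER x y -> E x y) ->
    forall a b, recurrent tau a -> recurrent tau b -> connect E a b.
  move=> E HE a b ra rb.
  have [m [Nm <-]] := ra N; have [m' [mm' <-]] := rb m.
  apply: (@walk_connect _ E tau N) => // i Ni; apply: HE; exact: HN.
have reach : forall m, reachable Q pi (tau m).
  move=> m; rewrite /reachable -H0; apply: (@walk_connect _ _ tau 0) => //.
have ERpg : forall x y, ER x y -> pgraph Q pi x y.
  move=> x y H; have [m [_ [<- <-]]] := H 0.
  by rewrite /pgraph reach Hst.
pose P pre := forall x y, ER x y -> edges_after Q pi (pgraph Q pi) pre x y.
case: (classic (P run)) => HP.
- exfalso.
  set E := edges_after Q pi (pgraph Q pi) run.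
  set u := tau N; set v := tau N.+1.
  have Huv : ER u v by exact: HN.
  have Euv : E u v by exact: HP.
  have [ru rv] := ERrec _ _ Huv.
  have vu : connect E v u := conn E HP v u rv ru.
  pose C := [set w | connect E u w && connect E w u].
  have vC : v \in C by rewrite inE (connect1 Euv) vu.
  have allC : all (mem C) (enum C) by apply/allP => w; rewrite mem_enum.
  have [p [Pp Lp Sp]] := @targets _ E u C (erefl C) (enum C) v vC allC.
  have /connectP [q Pq Lq] := reach N.
  have Esub : forall a b, E a b -> pistep Q pi a b.
    by move=> a b /edges_after_sub /andP [].
  have Pc : path E u (v :: p) by rewrite /= Euv Pp.
  have [S0 Sst Slate Su Svis] := pcyc_props Pq (esym Lq) Pc Lp (isT : 0 < size (v :: p)) Esub.
  set sig := pcyc _ _ _ _ in S0 Sst Slate Su Svis.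
  have Hsig : inf_traj_D Q pi sig by split.
  have [X [i0 [NoInc InfDec]]] := num_lemma Hsol Hsig.
  have lateC : forall n, size q <= n -> sig n \in C.
    move=> n Hn; rewrite inE; apply/andP; split.
      have -> : u = sig (size q) by rewrite Su.
      by apply: (@walk_connect _ E sig (size q)).
    have [m [nm Hm]] := Svis u (mem_head _ _) n.
    rewrite -Hm; apply: (@walk_connect _ E sig (size q)) => //.
  apply: (Hfin C X); split; [|split; [|split]].
  + by exists u; split; [exact: reach|].
  + have [j [Hj Hd]] := InfDec (size q); exists (sig j); split => //; exact: lateC.
  + move=> s sC.
    have sc : s \in u :: v :: p by rewrite inE Sp ?mem_enum ?orbT.
    have [m [Hm <-]] := Svis s sc i0; exact: NoInc.
  + move=> [C' [HC' sub]].
    have [j [Hj Hd]] := InfDec (size q).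
    have := Slate j Hj; apply/negP.
    have sC' := subsetP sub.
    exact: (@edges_after_rem _ _ _ Q pi run _ C' X _ _ HC' (sC' _ (lateC j Hj))
              (sC' _ (lateC j.+1 (leqW Hj))) Hd).
- have P0 : P [::] by move=> x y /ERpg.
  have [pre [[C X] [post [Hsplit [Hpre Hnot]]]]] := split_first P0 HP.
  have [[w [_ HC]] _] := Hrun pre C X post Hsplit.
  have [x Hx] := not_all_ex_not _ _ Hnot.
  have [y Hy] := not_all_ex_not _ _ Hx.
  have [Hxy Hn] := imply_to_and _ _ Hy.
  move: Hn; rewrite -cats1 edges_after_cat /= Hpre //=.
  case Hin: [&& x \in C, y \in C & isDec Q pi x X] => //= _.
  move/and3P: Hin => [xC yC Hd].
  have [rx _] := ERrec _ _ Hxy.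
  exists X, x; split => //; split => // b' rb'.
  exists C; split; first by rewrite Hsplit mem_cat inE eqxx orbT.
  move: xC; rewrite HC !inE => /andP [wx xw].
  have Hc := conn _ Hpre.
  by rewrite (connect_trans wx (Hc _ _ rx rb')) (connect_trans (Hc _ _ rb' rx) xw).
Qed.
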